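(* If $\mathcal{C}$ is a hypergraph with $\psi(\mathcal{C})=1$, then $\mathbb{S}^0$ is not contractible in $\operatorname{Ind}(\mathcal{C})$; that is, $\operatorname{Ind}(\mathcal{C})$ is nonempty but not path-connected.
   Context: A hypergraph $\mathcal{C}$ on a finite vertex set $V$ is a family of pairwise incomparable subsets of $V$ (its edges), each of cardinality at least $2$; vertices lying in no edge are allowed. The independence complex $\operatorname{Ind}(\mathcal{C})$ is the simplicial complex on $V$ whose faces are the subsets of $V$ containing no edge of $\mathcal{C}$. For an edge $F$: $\mathcal{C}-F$ is the hypergraph on $V$ with edge set $\mathcal{C}\setminus\{F\}$; $N_{\mathcal{C}}(F)=\bigcup\{E\setminus F : E\in\mathcal{C},\ |E\setminus F|=1\}$; and $\mathcal{C}:F$ is the hypergraph on $V\setminus(F\cup N_{\mathcal{C}}(F))$ whose edges are the members of cardinality at least $2$ among the inclusion-minimal members of the family $\{E\setminus F : E\in \mathcal{C}-F\}$. The number $\psi(\mathcal{C})\in\mathbb{Z}_{\ge 0}\cup\{\infty\}$ is defined recursively: $\psi(\mathcal{C})=0$ if $V=\emptyset$; $\psi(\mathcal{C})=\infty$ if $V\neq\emptyset$ and $\mathcal{C}$ has no edges; otherwise $\psi(\mathcal{C})=\max_{F\in\mathcal{C}}\min\{\psi(\mathcal{C}-F),\ \psi(\mathcal{C}:F)+|F|-1\}$. *)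

(* Defs.v *)
From mathcomp Require Import all_boot.
Set Implicit Arguments. Unset Strict Implicit. Unset Printing Implicit Defensive.

Definition is_hypergraph (T : finType) (V : {set T}) (C : {set {set T}}) : bool :=
  [forall E in C, (E \subset V) && (2 <= #|E|)] &&
  [forall E in C, forall E' in C, (E \subset E') ==> (E == E')].

(* Z_{>=0} u {oo}: [Some n] is n, [None] is oo. *)
Notation extnat := (option nat).

Definition emin (a b : extnat) : extnat :=
  match a, b with
  | None, x => x
  | x, None => x
  | Some m, Some n => Some (minn m n)
  end.

Definition emax (a b : extnat) : extnat :=
  match a, b with
  | None, _ => None
  | _, None => None
  | Some m, Some n => Some (maxn m n)
  end.

Definition eaddn (a : extnat) (k : nat) : extnat :=
  match a with None => None | Some m => Some (m + k) end.

Section Ops.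
Variable T : finType.

Definition nbhd (C : {set {set T}}) (F : {set T}) : {set T} :=
  \bigcup_(E in C | #|E :\: F| == 1) (E :\: F).

Definition colonV (V : {set T}) (C : {set {set T}}) (F : {set T}) : {set T} :=
  V :\: (F :|: nbhd C F).

Definition colonC (C : {set {set T}}) (F : {set T}) : {set {set T}} :=
  let D := [set E :\: F | E in C :\ F] in
  [set X in D | [forall Y in D, (Y \subset X) ==> (Y == X)] && (2 <= #|X|)].

(* psi with fuel; the number of edges strictly decreases in both recursive
   calls, so fuel #|C|.+1 suffices. *)
Fixpoint psi_fuel (n : nat) (V : {set T}) (C : {set {set T}}) : extnat :=
  match n with
  | 0 => None
  | n'.+1 =>
    if V == set0 then Some 0
    else if C == set0 then None
    else \big[emax/Some 0]_(F in C)
           emin (psi_fuel n' V (C :\ F))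
                (eaddn (psi_fuel n' (colonV V C F) (colonC C F)) (#|F| - 1))
  end.

Definition psi (V : {set T}) (C : {set {set T}}) : extnat :=
  psi_fuel #|C|.+1 V C.

Definition ind_face (V : {set T}) (C : {set {set T}}) (S : {set T}) : bool :=
  (S \subset V) && [forall E in C, ~~ (E \subset S)].

Definition ind_adj (V : {set T}) (C : {set {set T}}) : rel T :=
  fun x y => ind_face V C [set x; y].

Definition ind_nonempty (V : {set T}) (C : {set {set T}}) : Prop :=
  exists x, ind_face V C [set x].

(* Ind(C) (path-)connected: any two vertices are joined by an edge path in
   its 1-skeleton (equivalent to path-connectedness of the geometric
   realization). *)
Definition ind_connected (V : {set T}) (C : {set {set T}}) : Prop :=
  forall x y, ind_face V C [set x] -> ind_face V C [set y] ->
    connect (ind_adj V C) x y.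

End Ops.

(* Main.v *)
Require Import Defs.
From mathcomp Require Import all_boot.
From mathcomp Require Import zify.
Set Implicit Arguments. Unset Strict Implicit. Unset Printing Implicit Defensive.

Definition geb (k : nat) (a : extnat) : bool := if a is Some m then k <= m else true.

Lemma geb_emin k a b : geb k a -> geb k b -> geb k (emin a b).
Proof. by case: a => [m|] //; case: b => [n|] //= h1 h2; rewrite leq_min h1 h2. Qed.

Lemma geb_emaxl k a b : geb k a -> geb k (emax a b).
Proof. by case: a => [m|] //; case: b => [n|] //= h1; rewrite leq_max h1. Qed.

Lemma geb_emaxr k a b : geb k b -> geb k (emax a b).
Proof. by case: a => [m|] //; case: b => [n|] //= h1; rewrite leq_max h1 orbT. Qed.

Lemma geb_big k (I : eqType) (r : seq I) (P : pred I) (f : I -> extnat) x :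
  x \in r -> P x -> geb k (f x) -> geb k (\big[emax/Some 0]_(i <- r | P i) f i).
Proof.
elim: r => [|y r IH] //=; rewrite in_cons => /orP [/eqP -> | xr] Px hx; rewrite big_cons.
- by rewrite Px; apply: geb_emaxl.
- by case: (P y); [apply: geb_emaxr|]; apply: IH.
Qed.

Section S.
Variable T : finType.
Implicit Types (V : {set T}) (C : {set {set T}}).

Lemma face1 V C x :
  (forall E, E \in C -> 2 <= #|E|) -> ind_face V C [set x] = (x \in V).
Proof.
move=> hs; rewrite /ind_face sub1set; case: (x \in V) => //=.
apply/forallP => E; apply/implyP => EC; apply/negP => /subset_leq_card.
by rewrite cards1 => h; have := hs E EC; lia.
Qed.

Lemma face_edge V C S E : ind_face V C S -> E \in C -> E \subset S -> False.
Proof.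
rewrite /ind_face => /andP [_ /forallP /(_ E)] h EC; rewrite EC /= in h.
by rewrite (negbTE h).
Qed.

Lemma face_sub V C S : ind_face V C S -> S \subset V.
Proof. by case/andP. Qed.

Lemma face_D V C G S : ind_face V C S -> ind_face V (C :\ G) S.
Proof.
move=> h; rewrite /ind_face (face_sub h) /=; apply/forallP => E; apply/implyP.
rewrite inE => /andP [_ EC]; apply/negP => ES; exact: face_edge h EC ES.
Qed.

Lemma cardD1_lt C F : F \in C -> #|C :\ F| < #|C|.
Proof. by move=> FC; rewrite [X in _ < X](cardsD1 F C) FC. Qed.

Lemma card_colonC C F : F \in C -> #|colonC C F| < #|C|.
Proof.
move=> FC; rewrite /colonC.
have h1 : #|[set X in [set E :\: F | E in C :\ F] |
        [forall Y in [set E :\: F | E in C :\ F], (Y \subset X) ==> (Y == X)] && (2 <= #|X|)]|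
        <= #|[set E :\: F | E in C :\ F]|.
  by apply: subset_leq_card; apply/subsetP => X; rewrite inE => /andP[].
have h2 := leq_imset_card (fun E => E :\: F) (C :\ F).
apply: (leq_ltn_trans h1); apply: (leq_ltn_trans h2).
by rewrite [X in _ < X](cardsD1 F C) FC.
Qed.

Lemma L1 n V C :
  #|C| < n -> (forall E, E \in C -> 2 <= #|E|) -> V != set0 -> geb 1 (psi_fuel n V C).
Proof.
elim: n V C => [|n IH] V C //= hn hs hV.
rewrite (negbTE hV); case: eqP => [//|/eqP /set0Pn [F FC]].
apply: (@geb_big _ _ _ _ _ F); [exact: mem_index_enum | exact: FC | ].
apply: geb_emin.
- apply: IH => //.
  + by apply: leq_trans (cardD1_lt FC) _.
  + by move=> E; rewrite inE => /andP[_]; exact: hs.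
- by have := hs F FC; case: (psi_fuel _ _ _) => //= m h; lia.
Qed.

Lemma path_lemma (e : rel T) (Q : pred T) :
  (forall x, Q x -> e x x) -> (forall x y, e x y -> Q y) ->
  forall p u, Q u -> path e u p -> ~~ e u (last u p) ->
  exists x0 x1 x2, [/\ e x0 x1, e x1 x2 & ~~ e x0 x2].
Proof.
move=> hr hq; elim=> [|y p IH] u Qu /=.
- by move=> _; rewrite hr.
- case/andP=> euy py.
  case: (boolP (e y (last y p))) => h.
  + by move=> neu; exists u, y, (last y p).
  + by move=> _; exact: IH (hq _ _ euy) py h.
Qed.

Lemma L2 n V C :
  #|C| < n -> (forall E, E \in C -> 2 <= #|E|) -> (forall E, E \in C -> E \subset V) ->
  (forall E E', E \in C -> E' \in C -> E \subset E' -> E = E') ->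
  V != set0 -> ind_connected V C -> geb 2 (psi_fuel n V C).
Proof.
elim: n V C => [|n IH] V C //= hn hs hsub hi hV hc.
rewrite (negbTE hV); case: eqP => [//|/eqP /set0Pn [F FC]].
have IHD : forall G, G \in C -> geb 2 (psi_fuel n V (C :\ G)).
  move=> G GC; apply: IH => //.
  + by apply: leq_trans (cardD1_lt GC) _.
  + by move=> E; rewrite inE => /andP[_]; exact: hs.
  + by move=> E; rewrite inE => /andP[_]; exact: hsub.
  + by move=> E E'; rewrite !inE => /andP[_ ?] /andP[_ ?]; exact: hi.
  + move=> x y; rewrite !face1; last (by move=> E; rewrite inE => /andP[_]; exact: hs);
      last (by move=> E; rewrite inE => /andP[_]; exact: hs).
    move=> xV yV; have := hc x y; rewrite !face1 // => /(_ xV yV).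
    apply: connect_sub => a b hab; apply: connect1; exact: face_D.
have adjV : forall x y, ind_adj V C x y -> (x \in V) && (y \in V).
  move=> x y /face_sub /subsetP h; apply/andP; split; apply: h; rewrite !inE eqxx ?orbT //.
case: (ltnP 2 #|F|) => hF.
  apply: (@geb_big _ _ _ _ _ F); [exact: mem_index_enum | exact: FC | ].
  apply: geb_emin; first exact: IHD.
  by case: (psi_fuel _ _ _) => //= m; lia.
have /cards2P [u [v [uv Fe]]] : #|F| == 2 by apply/eqP; have := hs F FC; lia.
have uV : u \in V by apply: (subsetP (hsub F FC)); rewrite Fe !inE eqxx.
have vV : v \in V by apply: (subsetP (hsub F FC)); rewrite Fe !inE eqxx orbT.
have nuv : ~~ ind_adj V C u v.
  by apply/negP => h; apply: (face_edge h FC); rewrite Fe.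
have := hc u v; rewrite !face1 // => /(_ uV vV) /connectP [p pp lp].
have [x0 [x1 [x2 [a01 a12 n02]]]] : exists x0 x1 x2,
    [/\ ind_adj V C x0 x1, ind_adj V C x1 x2 & ~~ ind_adj V C x0 x2].
  apply: (@path_lemma _ (mem V) _ _ p u) => //; last by rewrite -lp.
  - by move=> x xV; rewrite /ind_adj setUid face1.
  - by move=> x y /adjV /andP[].
have /andP [x0V x1V] := adjV _ _ a01.
have /andP [_ x2V] := adjV _ _ a12.
have [E EC ES] : exists2 E, E \in C & E \subset [set x0; x2].
  move: n02; rewrite /ind_adj /ind_face.
  have -> : [set x0; x2] \subset V.
    by apply/subsetP => z; rewrite !inE => /orP[]/eqP->.
  rewrite /= negb_forall => /existsP [E]; rewrite negb_imply negbK => /andP [EC ES].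
  by exists E.
have EF : E = [set x0; x2].
  apply/eqP; rewrite eqEcard ES /=; apply: leq_trans (hs E EC).
  by rewrite cards2; case: (_ != _).
have x10 : x1 != x0 by apply: (contraNneq _ n02) => <-; exact: a12.
have x12 : x1 != x2 by apply: (contraNneq _ n02) => <-; exact: a01.
have inE' : forall z, (z \in E) = (z == x0) || (z == x2) by move=> z; rewrite EF !inE.
have notN : x1 \notin nbhd C E.
  apply/negP; rewrite /nbhd => /bigcupP [G /andP [GC /eqP G1] xG].
  have GF : G :\: E = [set x1].
    by apply/eqP; rewrite eq_sym eqEcard sub1set xG cards1 G1 leqnn.
  have hG : forall z, z \in G -> [|| z == x0, z == x1 | z == x2].
    move=> z zG; case: (boolP (z \in E)) => [|zE].
      by rewrite inE' => /orP[]->; rewrite ?orbT.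
    have : z \in G :\: E by rewrite inE zE zG.
    by rewrite GF inE => ->; rewrite orbT.
  case: (boolP (x2 \in G)) => x2G.
    case: (boolP (x0 \in G)) => x0G.
      have EG : E \subset G by apply/subsetP => z; rewrite inE' => /orP[]/eqP->.
      have := hi E G EC GC EG => eGE.
      by move: xG; rewrite -eGE setDv inE.
    apply: (face_edge a12 GC); apply/subsetP => z zG.
    have := hG z zG; case/or3P => /eqP ?; subst z; rewrite ?inE ?eqxx ?orbT //.
    by rewrite zG in x0G.
  apply: (face_edge a01 GC); apply/subsetP => z zG.
  have := hG z zG; case/or3P => /eqP ?; subst z; rewrite ?inE ?eqxx ?orbT //.
  by rewrite zG in x2G.
have x1C : x1 \in colonV V C E.
  by rewrite /colonV in_setD in_setU negb_or notN x1V inE' negb_or x10 x12.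
have cE : #|E| = 2.
  apply/eqP; rewrite eqn_leq (hs E EC) andbT {1}EF cards2.
  by case: (_ != _).
apply: (@geb_big _ _ _ _ _ E); [exact: mem_index_enum | exact: EC | ].
apply: geb_emin; first exact: IHD.
have h1 : geb 1 (psi_fuel n (colonV V C E) (colonC C E)).
  apply: L1.
  - by apply: leq_trans (card_colonC EC) _.
  - by move=> X; rewrite inE => /andP [_ /andP [_ ->]].
  - by apply/set0Pn; exists x1.
move: h1; rewrite cE; case: (psi_fuel n (colonV V C E) (colonC C E)) => [m|] //=; rewrite addn1 ltnS; exact: id.
Qed.

End S.

Theorem lemma3p6 (T : finType) (V : {set T}) (C : {set {set T}}) :
  is_hypergraph V C -> psi V C = Some 1 ->
  ind_nonempty V C /\ ~ ind_connected V C.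
Proof.
case/andP => /forallP h1 /forallP h2.
have hs : forall E, E \in C -> 2 <= #|E|.
  by move=> E EC; have := h1 E; rewrite EC /= => /andP[].
have hsub : forall E, E \in C -> E \subset V.
  by move=> E EC; have := h1 E; rewrite EC /= => /andP[].
have hi : forall E E', E \in C -> E' \in C -> E \subset E' -> E = E'.
  move=> E E' EC E'C sub; have /forallP /(_ E') := (implyP (h2 E) EC).
  by rewrite E'C sub /= => /eqP.
rewrite /psi => hp.
have hV : V != set0 by apply/negP => /eqP hV; move: hp; rewrite /= hV eqxx.
split.
  by case/set0Pn: hV => x xV; exists x; rewrite face1.
move=> hc; have := L2 (ltnSn _) hs hsub hi hV hc; by rewrite hp.
Qed.
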